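(* Let $k:[0,1]\times[0,1]\to\mathbb{R}$ be continuous and let $f$ be a real function of $(x,u,v,z)$. Define $$G_0(x,s)=\frac16\begin{cases} s(x-1)(x^2-x+s^2), & 0\le s\le x\le 1,\\ x(s-1)(s^2-s+x^2), & 0\le x\le s\le 1,\end{cases}\qquad G_1(x,s)=\frac16\begin{cases} s(3x^2-6x+s^2+2), & 0\le s\le x\le 1,\\ (s-1)(3x^2-2s+s^2), & 0\le x\le s\le 1,\end{cases}$$ $M_0=\max_{0\le x\le1}\int_0^1|G_0(x,s)|\,ds$, $M_1=\max_{0\le x\le 1}\int_0^1|G_1(x,s)|\,ds$, $M_2=\max_{0\le x\le1}\int_0^1|k(x,s)|\,ds$, and for $M>0$ $$\mathcal{D}_M^+=\{(x,u,v,z): 0\le x\le 1,\ 0\le u\le M_0M,\ |v|\le M_1M,\ |z|\le M_0M_2M\}.$$ Suppose there exist numbers $M>0$ and $L_0,L_1,L_2\ge 0$ such that: (i) $f$ is continuous on $\mathcal{D}_M^+$, $0\le f(x,u,v,z)\le M$ for all $(x,u,v,z)\in\mathcal{D}_M^+$, and the function $x\mapsto f(x,0,0,0)$ is not identically zero on $[0,1]$; (ii) $|f(x_2,u_2,v_2,z_2)-f(x_1,u_1,v_1,z_1)|\le L_0|u_2-u_1|+L_1|v_2-v_1|+L_2|z_2-z_1|$ for all $(x_i,u_i,v_i,z_i)\in\mathcal{D}_M^+$, $i=1,2$; (iii) $q:=L_0M_0+L_1M_1+L_2M_2<1$. Then the problem $$u^{(4)}(x)=f\Big(x,u(x),u'(x),\int_0^1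 k(x,t)u(t)\,dt\Big),\ 0<x<1,\qquad u(0)=u(1)=u''(0)=u''(1)=0$$ has a unique positive solution $u\in C^4[0,1]$ satisfying $0\le u(x)\le M_0M$ and $|u'(x)|\le M_1M$ for all $0\le x\le 1$.
   Context: $G_0$ is the Green function of $u''''=0$ with boundary conditions $u(0)=u''(0)=u(1)=u''(1)=0$, and $G_1=\partial G_0/\partial x$. The paper computes $M_0=5/384$ and $M_1=1/24$. *)

(* Defs.v *)
From Stdlib Require Import Reals.
From Coquelicot Require Import Coquelicot.
Open Scope R_scope.

(* Green function of u''''=0, u(0)=u''(0)=u(1)=u''(1)=0 *)
Definition G0 (x s : R) : R :=
  if Rle_dec s x then s * (1 - x) * (2 * x - x ^ 2 - s ^ 2) / 6
  else x * (1 - s) * (2 * s - s ^ 2 - x ^ 2) / 6.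

(* G1 = dG0/dx, exactly as in the paper *)
Definition G1 (x s : R) : R :=
  if Rle_dec s x then s * (3 * x ^ 2 - 6 * x + s ^ 2 + 2) / 6
  else (s - 1) * (3 * x ^ 2 - 2 * s + s ^ 2) / 6.

Definition max01 (F : R -> R) : R :=
  real (Lub_Rbar (fun y => exists x, 0 <= x <= 1 /\ y = F x)).

Definition M0 : R := max01 (fun x => RInt (fun s => Rabs (G0 x s)) 0 1).
Definition M1 : R := max01 (fun x => RInt (fun s => Rabs (G1 x s)) 0 1).
Definition M2 (k : R -> R -> R) : R :=
  max01 (fun x => RInt (fun s => Rabs (k x s)) 0 1).

Definition inD (k : R -> R -> R) (M x u v z : R) : Prop :=
  0 <= x <= 1 /\ 0 <= u <= M0 * M /\ Rabs v <= M1 * M /\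
  Rabs z <= M0 * M2 k * M.

Definition cont_square (k : R -> R -> R) : Prop :=
  forall x s, 0 <= x <= 1 -> 0 <= s <= 1 ->
  forall eps, 0 < eps -> exists delta, 0 < delta /\
    forall x' s', 0 <= x' <= 1 -> 0 <= s' <= 1 ->
      Rabs (x' - x) < delta -> Rabs (s' - s) < delta ->
      Rabs (k x' s' - k x s) < eps.

Definition cont_on_D (k : R -> R -> R) (M : R) (f : R -> R -> R -> R -> R) : Prop :=
  forall x u v z, inD k M x u v z ->
  forall eps, 0 < eps -> exists delta, 0 < delta /\
    forall x' u' v' z', inD k M x' u' v' z' ->
      Rabs (x' - x) < delta -> Rabs (u' - u) < delta ->
      Rabs (v' - v) < delta -> Rabs (z' - z) < delta ->
      Rabs (f x' u' v' z' - f x u v z) < eps.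

Definition deriv_on01 (g g' : R -> R) : Prop :=
  forall x, 0 <= x <= 1 ->
  forall eps, 0 < eps -> exists delta, 0 < delta /\
    forall y, 0 <= y <= 1 -> y <> x -> Rabs (y - x) < delta ->
      Rabs ((g y - g x) / (y - x) - g' x) < eps.

Definition cont_on01 (g : R -> R) : Prop :=
  forall x, 0 <= x <= 1 ->
  forall eps, 0 < eps -> exists delta, 0 < delta /\
    forall y, 0 <= y <= 1 -> Rabs (y - x) < delta -> Rabs (g y - g x) < eps.

Definition is_pos_sol (k : R -> R -> R) (f : R -> R -> R -> R -> R) (M : R)
  (u : R -> R) : Prop :=
  exists u1 u2 u3 u4 : R -> R,
    deriv_on01 u u1 /\ deriv_on01 u1 u2 /\ deriv_on01 u2 u3 /\
    deriv_on01 u3 u4 /\ cont_on01 u4 /\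
    (forall x, 0 < x < 1 ->
       u4 x = f x (u x) (u1 x) (RInt (fun t => k x t * u t) 0 1)) /\
    u 0 = 0 /\ u 1 = 0 /\ u2 0 = 0 /\ u2 1 = 0 /\
    (forall x, 0 < x < 1 -> 0 < u x) /\
    (forall x, 0 <= x <= 1 -> 0 <= u x <= M0 * M /\ Rabs (u1 x) <= M1 * M).

(* Main.v *)
Require Import Defs.
From Stdlib Require Import Reals Lra Psatz ClassicalEpsilon Classical.
From Coquelicot Require Import Coquelicot.
Open Scope R_scope.

Lemma cpt_cont f x : continuity_pt f x -> continuous f x.
Proof. intro H. now apply continuity_pt_filterlim. Qed.
Lemma cont_cpt f x : continuous f x -> continuity_pt f x.
Proof. intro H. now apply continuity_pt_filterlim. Qed.

Lemma cpt_intro f x : (forall eps, 0 < eps -> exists d, 0 < d /\ forall y, Rabs (y - x) < d -> Rabs (f y - f x) < eps) -> continuity_pt f x.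
Proof.
  intros H eps Heps. destruct (H eps Heps) as [d [Hd H2]]. exists d. split; [lra|].
  intros y [_ Hy]. unfold R_dist in *. simpl in *. unfold R_dist in *. now apply H2.
Qed.
Lemma cpt_elim f x : continuity_pt f x -> (forall eps, 0 < eps -> exists d, 0 < d /\ forall y, Rabs (y - x) < d -> Rabs (f y - f x) < eps).
Proof.
  intros H eps Heps. destruct (H eps Heps) as [d [Hd H2]]. exists d. split; [lra|].
  intros y Hy. destruct (Req_dec y x) as [->|Hne].
  - rewrite Rminus_eq_0, Rabs_R0; lra.
  - apply (H2 y). split. split; [exact I| auto]. exact Hy.
Qed.

Definition cl (x : R) : R := Rmax 0 (Rmin 1 x).
Lemma cl_in x : 0 <= cl x <= 1.
Proof. unfold cl, Rmax, Rmin. repeat destruct Rle_dec; lra. Qed.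
Lemma cl_id x : 0 <= x <= 1 -> cl x = x.
Proof. intro. unfold cl, Rmax, Rmin. repeat destruct Rle_dec; lra. Qed.
Lemma cl_lip x y : Rabs (cl y - cl x) <= Rabs (y - x).
Proof. unfold cl, Rmax, Rmin. repeat destruct Rle_dec; unfold Rabs; repeat destruct Rcase_abs; lra. Qed.
Lemma cl_cl x : cl (cl x) = cl x.
Proof. apply cl_id, cl_in. Qed.

Lemma cont_cl g : cont_on01 g -> forall x, continuity_pt (fun y => g (cl y)) x.
Proof.
  intros Hg x. apply cpt_intro. intros eps He.
  destruct (Hg (cl x) (cl_in x) eps He) as [d [Hd H]]. exists d. split; auto.
  intros y Hy. apply H. apply cl_in. eapply Rle_lt_trans; [apply cl_lip| exact Hy].
Qed.

Lemma cl_cont x : continuity_pt cl x.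
Proof.
  apply cpt_intro. intros eps He. exists eps. split; auto. intros y Hy.
  eapply Rle_lt_trans; [apply cl_lip| exact Hy].
Qed.

Lemma isd_deriv g g' : (forall x, is_derive g x (g' x)) -> deriv_on01 g g'.
Proof.
  intros H x Hx eps He. pose proof (proj1 (is_derive_Reals g x (g' x)) (H x) eps He) as [d Hd].
  exists d. split; [apply cond_pos|]. intros y Hy Hne Hyd.
  specialize (Hd (y - x)). replace (x + (y - x)) with y in Hd by ring.
  apply Hd; auto. intro; apply Hne; lra.
Qed.

Lemma deriv_ext g g' h h' : deriv_on01 g g' -> (forall x, 0 <= x <= 1 -> g x = h x) ->
  (forall x, 0 <= x <= 1 -> g' x = h' x) -> deriv_on01 h h'.
Proof.
  intros H E1 E2 x Hx eps He. destruct (H x Hx eps He) as [d [Hd H2]]. exists d; split; auto.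
  intros y Hy Hne Hyd. rewrite <- !E1, <- E2 by auto. auto.
Qed.

Lemma deriv_minus g g' h h' : deriv_on01 g g' -> deriv_on01 h h' ->
  deriv_on01 (fun x => g x - h x) (fun x => g' x - h' x).
Proof.
  intros H1 H2 x Hx eps He.
  destruct (H1 x Hx (eps/2)) as [d1 [Hd1 K1]]; [lra|].
  destruct (H2 x Hx (eps/2)) as [d2 [Hd2 K2]]; [lra|].
  exists (Rmin d1 d2). split; [apply Rmin_pos; auto|].
  intros y Hy Hne Hyd. specialize (K1 y Hy Hne (Rlt_le_trans _ _ _ Hyd (Rmin_l _ _))).
  specialize (K2 y Hy Hne (Rlt_le_trans _ _ _ Hyd (Rmin_r _ _))).
  replace ((g y - h y - (g x - h x)) / (y - x) - (g' x - h' x)) with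
    (((g y - g x) / (y - x) - g' x) - ((h y - h x) / (y - x) - h' x)) by (field; lra).
  eapply Rle_lt_trans; [apply Rabs_triang|]. rewrite Rabs_Ropp. lra.
Qed.

Lemma deriv_cont g g' : deriv_on01 g g' -> cont_on01 g.
Proof.
  intros H x Hx eps He. destruct (H x Hx 1 Rlt_0_1) as [d [Hd K]].
  exists (Rmin d (eps / (Rabs (g' x) + 1))). split.
  { apply Rmin_pos; auto. apply Rdiv_lt_0_compat; auto. pose proof (Rabs_pos (g' x)); lra. }
  intros y Hy Hyd. destruct (Req_dec y x) as [->|Hne]. { rewrite Rminus_eq_0, Rabs_R0; lra. }
  specialize (K y Hy Hne (Rlt_le_trans _ _ _ Hyd (Rmin_l _ _))).
  assert (Hyx : y - x <> 0) by lra.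
  replace (g y - g x) with (((g y - g x) / (y - x)) * (y - x)) by (field; auto).
  rewrite Rabs_mult.
  assert (Rabs ((g y - g x) / (y - x)) <= Rabs (g' x) + 1).
  { replace ((g y - g x) / (y - x)) with (((g y - g x) / (y - x) - g' x) + g' x) by ring.
    eapply Rle_trans; [apply Rabs_triang|]. lra. }
  assert (Rabs (y - x) < eps / (Rabs (g' x) + 1)) by (eapply Rlt_le_trans; [exact Hyd| apply Rmin_r]).
  pose proof (Rabs_pos (g' x)). pose proof (Rabs_pos ((g y - g x) / (y - x))).
  apply Rle_lt_trans with ((Rabs (g' x) + 1) * Rabs (y - x)).
  { apply Rmult_le_compat_r; auto. apply Rabs_pos. }
  apply Rmult_lt_reg_l with (/ (Rabs (g' x) + 1)). { apply Rinv_0_lt_compat; lra. }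
  rewrite <- Rmult_assoc, Rinv_l by lra. unfold Rdiv in *. lra.
Qed.

Lemma const01 g g' : deriv_on01 g g' -> (forall x, 0 <= x <= 1 -> g' x = 0) ->
  forall x, 0 <= x <= 1 -> g x = g 0.
Proof.
  intros H H0.
  set (h := fun y => g (cl y)).
  assert (Hl : forall x, 0 < x < 1 -> derivable_pt_lim h x (g' x)).
  { intros x Hx eps He. destruct (H x ltac:(lra) eps He) as [d [Hd K]].
    assert (Hp : 0 < Rmin d (Rmin x (1 - x))) by (repeat apply Rmin_pos; lra).
    exists (mkposreal _ Hp). intros h0 Hh0 Hh0d. simpl in Hh0d.
    assert (Hb : Rabs h0 < d /\ Rabs h0 < x /\ Rabs h0 < 1 - x).
    { pose proof (Rmin_l d (Rmin x (1 - x))). pose proof (Rmin_r d (Rmin x (1 - x))).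
      pose proof (Rmin_l x (1 - x)). pose proof (Rmin_r x (1 - x)). lra. }
    destruct Hb as [B1 [B2 B3]].
    assert (Hin : 0 <= x + h0 <= 1).
    { revert B2 B3; unfold Rabs; destruct Rcase_abs; intros; lra. }
    unfold h. rewrite !cl_id by lra.
    specialize (K (x + h0) Hin ltac:(lra)). replace (x + h0 - x) with h0 in K by ring.
    apply K. auto. }
  assert (pr : forall x, 0 < x < 1 -> derivable_pt h x).
  { intros x Hx. exists (g' x). apply Hl; auto. }
  pose proof (null_derivative_loc h 0 1 pr) as N.
  assert (C : forall x, 0 <= x <= 1 -> h x = h 0).
  { apply N.
    - intros x Hx. apply cont_cl. eapply deriv_cont; eauto.
    - intros x P. unfold derive_pt. destruct (pr x P) as [l Hl2]. simpl.
      rewrite <- (H0 x) by lra. eapply uniqueness_limite; eauto. }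
  intros x Hx. specialize (C x Hx). unfold h in C. rewrite !cl_id in C by lra. auto.
Qed.

Definition contR (g : R -> R) := forall x, continuity_pt g x.

Lemma exi (g : R -> R) a b : contR g -> ex_RInt g a b.
Proof. intros H. apply (ex_RInt_continuous (V:=R_CompleteNormedModule)). intros. apply cpt_cont, H. Qed.

Lemma RInt_scalR (f : R -> R) a b l : ex_RInt f a b -> RInt (fun x => l * f x) a b = l * RInt f a b.
Proof. intro H. apply (RInt_scal f a b l H). Qed.
Lemma RInt_plusR (f g : R -> R) a b : ex_RInt f a b -> ex_RInt g a b ->
  RInt (fun x => f x + g x) a b = RInt f a b + RInt g a b.
Proof. intros. apply (RInt_plus f g a b); auto. Qed.
Lemma RInt_minusR (f g : R -> R) a b : ex_RInt f a b -> ex_RInt g a b ->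
  RInt (fun x => f x - g x) a b = RInt f a b - RInt g a b.
Proof. intros. apply (RInt_minus f g a b); auto. Qed.
Lemma RInt_constR (c a b : R) : RInt (fun _ => c) a b = (b - a) * c.
Proof. apply (RInt_const a b c). Qed.
Lemma RInt_ChaslesR (f : R -> R) a b c : ex_RInt f a b -> ex_RInt f b c -> RInt f a b + RInt f b c = RInt f a c.
Proof. intros. apply (RInt_Chasles f a b c); auto. Qed.
Lemma ex_RInt_scalR (f : R -> R) a b l : ex_RInt f a b -> ex_RInt (fun x => l * f x) a b.
Proof. intro H. apply (ex_RInt_scal f a b l H). Qed.
Lemma ex_RInt_minusR (f g : R -> R) a b : ex_RInt f a b -> ex_RInt g a b -> ex_RInt (fun x => f x - g x) a b.
Proof. intros. apply (ex_RInt_minus f g a b); auto. Qed.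

Lemma RInt_bound (g w : R -> R) B : ex_RInt g 0 1 -> ex_RInt w 0 1 ->
  (forall t, 0 < t < 1 -> Rabs (g t) <= w t * B) -> Rabs (RInt g 0 1) <= RInt w 0 1 * B.
Proof.
  intros Hg Hw H.
  assert (E : RInt (fun t => w t * B) 0 1 = RInt w 0 1 * B).
  { rewrite (Rmult_comm (RInt w 0 1) B), <- RInt_scalR by auto. apply RInt_ext. intros; apply Rmult_comm. }
  assert (Hw' : ex_RInt (fun t => w t * B) 0 1).
  { apply (ex_RInt_ext (fun t => B * w t)). intros; apply Rmult_comm. apply ex_RInt_scalR; auto. }
  apply Rabs_le. split.
  - assert (E2 : RInt (fun t => - (w t * B)) 0 1 = - (RInt w 0 1 * B)).
    { rewrite <- E. apply (RInt_opp (fun t => w t * B) 0 1 Hw'). }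
    rewrite <- E2. apply RInt_le; try lra; auto.
    + apply (ex_RInt_opp (fun t => w t * B) 0 1 Hw').
    + intros t Ht. specialize (H t Ht). apply Rabs_le_between in H. lra.
  - rewrite <- E. apply RInt_le; try lra; auto.
    intros t Ht. specialize (H t Ht). apply Rabs_le_between in H. lra.
Qed.

Lemma pw_cont (p q : R -> R) x0 : contR p -> contR q -> p x0 = q x0 ->
  contR (fun s => if Rle_dec s x0 then p s else q s).
Proof.
  intros Hp Hq E s0. apply cpt_intro. intros eps He.
  destruct (cpt_elim p s0 (Hp s0) eps He) as [dp [Hdp Kp]].
  destruct (cpt_elim q s0 (Hq s0) eps He) as [dq [Hdq Kq]].
  destruct (Rtotal_order s0 x0) as [Hl|[He0|Hg]].
  - exists (Rmin dp (x0 - s0)). split. apply Rmin_pos; lra.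
    intros y Hy. pose proof (Rmin_l dp (x0 - s0)). pose proof (Rmin_r dp (x0 - s0)).
    assert (y < x0) by (revert Hy; unfold Rabs; destruct Rcase_abs; intros; lra).
    destruct (Rle_dec y x0); [|lra]. destruct (Rle_dec s0 x0); [|lra]. apply Kp; lra.
  - subst. exists (Rmin dp dq). split. apply Rmin_pos; lra.
    intros y Hy. pose proof (Rmin_l dp dq). pose proof (Rmin_r dp dq).
    destruct (Rle_dec x0 x0); [|lra].
    destruct (Rle_dec y x0). apply Kp; lra. rewrite E. apply Kq; lra.
  - exists (Rmin dq (s0 - x0)). split. apply Rmin_pos; lra.
    intros y Hy. pose proof (Rmin_l dq (s0 - x0)). pose proof (Rmin_r dq (s0 - x0)).
    assert (y > x0) by (revert Hy; unfold Rabs; destruct Rcase_abs; intros; lra).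
    destruct (Rle_dec y x0); [lra|]. destruct (Rle_dec s0 x0); [lra|]. apply Kq; lra.
Qed.

Lemma G0_cont x : contR (fun s => G0 x s).
Proof.
  unfold G0. apply pw_cont; [intro; reg| intro; reg| ring].
Qed.
Lemma G1_cont x : contR (fun s => G1 x s).
Proof.
  unfold G1. apply pw_cont; [intro; reg| intro; reg| idtac]; cbv beta; field.
Qed.

Lemma G0_pos x s : 0 <= x <= 1 -> 0 <= s <= 1 -> 0 <= G0 x s <= 1.
Proof.
  intros Hx Hs. unfold G0. destruct Rle_dec.
  - assert (0 <= 2 * x - x ^ 2 - s ^ 2 <= 2) by nra.
    assert (0 <= s * (1 - x) <= 1) by nra. split; [|]; nra.
  - assert (0 <= 2 * s - s ^ 2 - x ^ 2 <= 2) by nra.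
    assert (0 <= x * (1 - s) <= 1) by nra. split; nra.
Qed.
Lemma G0_spos x s : 0 < x < 1 -> 0 < s < 1 -> 0 < G0 x s.
Proof.
  intros Hx Hs. unfold G0. destruct Rle_dec.
  - assert (0 < 2 * x - x ^ 2 - s ^ 2) by nra.
    assert (0 < s * (1 - x)) by nra. nra.
  - assert (0 < 2 * s - s ^ 2 - x ^ 2) by nra.
    assert (0 < x * (1 - s)) by nra. nra.
Qed.
Lemma G1_bnd x s : 0 <= x <= 1 -> 0 <= s <= 1 -> Rabs (G1 x s) <= 2.
Proof.
  intros Hx Hs. unfold G1. apply Rabs_le. destruct Rle_dec.
  - assert (-4 <= 3 * x ^ 2 - 6 * x + s ^ 2 + 2 <= 6) by nra. split; nra.
  - assert (-2 <= 3 * x ^ 2 - 2 * s + s ^ 2 <= 4) by nra. split; nra.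
Qed.

Lemma max01_ub F B : (forall x, 0 <= x <= 1 -> 0 <= F x <= B) ->
  (forall x, 0 <= x <= 1 -> F x <= max01 F) /\ 0 <= max01 F /\ max01 F <= B.
Proof.
  intros H. unfold max01.
  destruct (Lub_Rbar_correct (fun y => exists x, 0 <= x <= 1 /\ y = F x)) as [Hub Hlub].
  assert (U : Rbar_le (Lub_Rbar (fun y => exists x, 0 <= x <= 1 /\ y = F x)) B).
  { apply Hlub. intros y [x [Hx ->]]. simpl. apply H; auto. }
  assert (L : Rbar_le (F 0) (Lub_Rbar (fun y => exists x, 0 <= x <= 1 /\ y = F x))).
  { apply Hub. exists 0; split; auto; lra. }
  destruct (Lub_Rbar (fun y => exists x, 0 <= x <= 1 /\ y = F x)) as [r| |]; simpl in *; try easy.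
  assert (0 <= F 0) by (apply H; lra).
  split; [|split; lra].
  intros x Hx. assert (Rbar_le (F x) r). { apply Hub. exists x; auto. } simpl in *; auto.
Qed.

Lemma M0_prop : (forall x, 0 <= x <= 1 -> RInt (fun s => Rabs (G0 x s)) 0 1 <= M0) /\ 0 <= M0 /\ M0 <= 1.
Proof.
  apply max01_ub. intros x Hx.
  assert (Hi : ex_RInt (fun s => Rabs (G0 x s)) 0 1).
  { apply exi. intro s. apply (continuity_pt_comp (fun s => G0 x s) Rabs s (G0_cont x s) (Rcontinuity_abs _)). }
  split.
  - apply RInt_ge_0; auto; try lra. intros; apply Rabs_pos.
  - replace 1 with (RInt (fun _ => 1) 0 1) at 2 by (rewrite RInt_constR; change (@eq R ((1-0)*1) 1); ring).
    apply RInt_le; auto; try lra. apply ex_RInt_const.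
    intros s Hs. pose proof (G0_pos x s Hx ltac:(lra)). rewrite Rabs_pos_eq; lra.
Qed.

Lemma M1_prop : (forall x, 0 <= x <= 1 -> RInt (fun s => Rabs (G1 x s)) 0 1 <= M1) /\ 0 <= M1.
Proof.
  destruct (max01_ub (fun x => RInt (fun s => Rabs (G1 x s)) 0 1) 2) as [A [B _]].
  2: split; auto.
  intros x Hx.
  assert (Hi : ex_RInt (fun s => Rabs (G1 x s)) 0 1).
  { apply exi. intro s. apply (continuity_pt_comp (fun s => G1 x s) Rabs s (G1_cont x s) (Rcontinuity_abs _)). }
  split.
  - apply RInt_ge_0; auto; try lra. intros; apply Rabs_pos.
  - replace 2 with (RInt (fun _ => 2) 0 1) by (rewrite RInt_constR; change (@eq R ((1-0)*2) 2); ring).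
    apply RInt_le; auto; try lra. apply ex_RInt_const.
    intros s Hs. apply G1_bnd; lra.
Qed.

Ltac fixR := match goal with |- @eq _ ?a ?b => change (@eq R a b) end.

Section Forms.
Variable psi : R -> R.
Hypothesis Hpsi : contR psi.

Definition AI (i : nat) (x : R) := RInt (fun s => s ^ i * psi s) 0 x.
Definition CI (i : nat) := AI i 1.

Lemma pcont i : contR (fun s => s ^ i * psi s).
Proof. intro s. apply continuity_pt_mult; [|apply Hpsi]. reg. Qed.

Lemma AI_der i x : is_derive (AI i) x (x ^ i * psi x).
Proof.
  apply (is_derive_RInt (fun s => s ^ i * psi s) (AI i) 0 x).
  - exists (mkposreal 1 Rlt_0_1). intros y _. apply (RInt_correct (V:=R_CompleteNormedModule)). apply exi, pcont.
  - apply cpt_cont, pcont.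
Qed.
Lemma AI_ex i x : ex_derive (AI i) x.
Proof. eexists; apply AI_der. Qed.
Lemma AI_D i x : Derive (AI i) x = x ^ i * psi x.
Proof. apply is_derive_unique, AI_der. Qed.

Definition F0 x := (x^3 * AI 0 x - 3 * x^2 * AI 1 x + 3 * x * AI 2 x - AI 3 x
   + x * (2 * CI 1 - 3 * CI 2 + CI 3) - x^3 * (CI 0 - CI 1)) / 6.
Definition F1 x := (3 * x^2 * AI 0 x - 6 * x * AI 1 x + 3 * AI 2 x
   + (2 * CI 1 - 3 * CI 2 + CI 3) - 3 * x^2 * (CI 0 - CI 1)) / 6.
Definition F2 x := x * AI 0 x - AI 1 x - x * (CI 0 - CI 1).
Definition F3 x := AI 0 x - (CI 0 - CI 1).

Lemma F0_der x : is_derive F0 x (F1 x).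
Proof.
  unfold F0, F1. auto_derive.
  - repeat split; apply AI_ex.
  - rewrite !AI_D. simpl. field.
Qed.
Lemma F1_der x : is_derive F1 x (F2 x).
Proof.
  unfold F1, F2. auto_derive.
  - repeat split; apply AI_ex.
  - rewrite !AI_D. simpl. field.
Qed.
Lemma F2_der x : is_derive F2 x (F3 x).
Proof.
  unfold F2, F3. auto_derive.
  - repeat split; apply AI_ex.
  - rewrite !AI_D. simpl. field.
Qed.
Lemma F3_der x : is_derive F3 x (psi x).
Proof.
  unfold F3. auto_derive.
  - repeat split; apply AI_ex.
  - rewrite !AI_D. simpl. field.
Qed.
End Forms.

Section Green.
Variable psi : R -> R.
Hypothesis Hpsi : contR psi.

Lemma lin4 a b c0 c1 c2 c3 :
  RInt (fun s => c0 * (s^0 * psi s) + c1 * (s^1 * psi s) + c2 * (s^2 * psi s) + c3 * (s^3 * psi s)) a b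
  = c0 * RInt (fun s => s^0 * psi s) a b + c1 * RInt (fun s => s^1 * psi s) a b
    + c2 * RInt (fun s => s^2 * psi s) a b + c3 * RInt (fun s => s^3 * psi s) a b.
Proof.
  pose proof (fun i => exi _ a b (pcont psi Hpsi i)) as E.
  pose proof (fun i => RInt_correct (V:=R_CompleteNormedModule) _ _ _ (E i)) as I.
  apply is_RInt_unique.
  apply (is_RInt_plus (V:=R_CompleteNormedModule)); [apply (is_RInt_plus (V:=R_CompleteNormedModule)); [apply (is_RInt_plus (V:=R_CompleteNormedModule))|]|];
  apply (is_RInt_scal (V:=R_CompleteNormedModule)); apply I.
Qed.

Lemma tail_int i x : RInt (fun s => s ^ i * psi s) x 1 = CI psi i - AI psi i x :> R.
Proof.
  unfold CI, AI. rewrite <- (RInt_ChaslesR _ 0 x 1) by (apply exi, pcont, Hpsi). lra.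
Qed.

Lemma green_gen (K : R -> R -> R) x p0 p1 p2 p3 q0 q1 q2 q3 :
  0 <= x <= 1 -> contR (K x) ->
  (forall s, 0 < s < x -> K x s = p0 + p1 * s + p2 * s^2 + p3 * s^3) ->
  (forall s, x < s < 1 -> K x s = q0 + q1 * s + q2 * s^2 + q3 * s^3) ->
  RInt (fun s => K x s * psi s) 0 1 =
    p0 * AI psi 0 x + p1 * AI psi 1 x + p2 * AI psi 2 x + p3 * AI psi 3 x
    + q0 * (CI psi 0 - AI psi 0 x) + q1 * (CI psi 1 - AI psi 1 x)
    + q2 * (CI psi 2 - AI psi 2 x) + q3 * (CI psi 3 - AI psi 3 x) :> R.
Proof.
  intros Hx HK Hp Hq.
  assert (Hc : contR (fun s => K x s * psi s)). { intro s. apply continuity_pt_mult; auto. }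
  rewrite <- (RInt_ChaslesR _ 0 x 1) by (apply exi; auto).
  rewrite (RInt_ext _ (fun s => p0 * (s^0 * psi s) + p1 * (s^1 * psi s) + p2 * (s^2 * psi s) + p3 * (s^3 * psi s))).
  2:{ intros s Hs. rewrite Rmin_left in Hs by lra. rewrite Rmax_right in Hs by lra.
      rewrite Hp by lra. simpl. ring. }
  rewrite (RInt_ext (fun s => K x s * psi s) (fun s => q0 * (s^0 * psi s) + q1 * (s^1 * psi s) + q2 * (s^2 * psi s) + q3 * (s^3 * psi s)) x 1).
  2:{ intros s Hs. rewrite Rmin_left in Hs by lra. rewrite Rmax_right in Hs by lra.
      rewrite Hq by lra. simpl. ring. }
  rewrite !lin4, !tail_int. unfold AI. fixR; ring.
Qed.

Lemma U_F0 x : 0 <= x <= 1 -> RInt (fun s => G0 x s * psi s) 0 1 = F0 psi x :> R.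
Proof.
  intros Hx.
  rewrite (green_gen G0 x 0 ((1-x)*(2*x-x^2)/6) 0 (-(1-x)/6) (-x^3/6) ((2*x+x^3)/6) (-3*x/6) (x/6)); auto.
  - unfold F0. field.
  - apply G0_cont.
  - intros s Hs. unfold G0. destruct Rle_dec; [|lra]. field.
  - intros s Hs. unfold G0. destruct Rle_dec; [lra|]. field.
Qed.

Lemma V_F1 x : 0 <= x <= 1 -> RInt (fun s => G1 x s * psi s) 0 1 = F1 psi x :> R.
Proof.
  intros Hx.
  rewrite (green_gen G1 x 0 ((3*x^2-6*x+2)/6) 0 (1/6) (-3*x^2/6) ((3*x^2+2)/6) (-3/6) (1/6)); auto.
  - unfold F1. field.
  - apply G1_cont.
  - intros s Hs. unfold G1. destruct Rle_dec; [|lra]. field.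
  - intros s Hs. unfold G1. destruct Rle_dec; [lra|]. field.
Qed.

Lemma AI0 i : AI psi i 0 = 0.
Proof. unfold AI. apply (RInt_point (V:=R_CompleteNormedModule)). Qed.

Lemma F0_0 : F0 psi 0 = 0.
Proof. unfold F0. rewrite !AI0. field. Qed.
Lemma F0_1 : F0 psi 1 = 0.
Proof. unfold F0, CI. field. Qed.
Lemma F2_0 : F2 psi 0 = 0.
Proof. unfold F2. rewrite !AI0. ring. Qed.
Lemma F2_1 : F2 psi 1 = 0.
Proof. unfold F2, CI. ring. Qed.
End Green.

Section Kern.
Variable k : R -> R -> R.
Hypothesis Hk : cont_square k.

Lemma kunif x : 0 <= x <= 1 -> forall eps, 0 < eps -> exists d, 0 < d /\
  forall x' t, 0 <= x' <= 1 -> 0 <= t <= 1 -> Rabs (x' - x) < d -> Rabs (k x' t - k x t) < eps.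
Proof.
  intros Hx eps He.
  assert (Ex : forall t, exists d : posreal, 0 <= t <= 1 -> forall x' s', 0 <= x' <= 1 -> 0 <= s' <= 1 ->
      Rabs (x' - x) < d -> Rabs (s' - t) < d -> Rabs (k x' s' - k x t) < eps / 2).
  { intro t. destruct (classic (0 <= t <= 1)) as [Ht|Ht].
    - destruct (Hk x t Hx Ht (eps/2) ltac:(lra)) as [d [Hd K]].
      exists (mkposreal d Hd). intros _. exact K.
    - exists (mkposreal 1 Rlt_0_1). intros; tauto. }
  set (delta := fun t => proj1_sig (constructive_indefinite_description _ (Ex t))).
  assert (Hdel : forall t, 0 <= t <= 1 -> forall x' s', 0 <= x' <= 1 -> 0 <= s' <= 1 ->
      Rabs (x' - x) < delta t -> Rabs (s' - t) < delta t -> Rabs (k x' s' - k x t) < eps / 2).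
  { intro t. unfold delta. destruct (constructive_indefinite_description _ (Ex t)) as [d Hd]. simpl. exact Hd. }
  destruct (compactness_value_1d 0 1 delta) as [om Hom].
  exists om. split; [apply cond_pos|]. intros x' t Hx' Ht Hxx.
  apply NNPP. intro Hneg. apply (Hom t Ht). intros [t0 [Ht0 [H1 H2]]]. apply Hneg.
  assert (A1 : Rabs (k x' t - k x t0) < eps / 2).
  { apply Hdel; auto. lra. }
  assert (A2 : Rabs (k x t - k x t0) < eps / 2).
  { apply Hdel; auto. rewrite Rminus_eq_0, Rabs_R0. apply cond_pos. }
  replace (k x' t - k x t) with ((k x' t - k x t0) - (k x t - k x t0)) by ring.
  eapply Rle_lt_trans; [apply Rabs_triang|]. rewrite Rabs_Ropp. lra.
Qed.

Lemma kcont_t x : 0 <= x <= 1 -> contR (fun t => k x (cl t)).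
Proof.
  intros Hx t0. apply (cont_cl (fun t => k x t)). intros t Ht eps He.
  destruct (Hk x t Hx Ht eps He) as [d [Hd K]]. exists d. split; auto.
  intros y Hy Hyd. apply K; auto. rewrite Rminus_eq_0, Rabs_R0; lra.
Qed.

Lemma intK_cont (K : R -> R -> R) :
  (forall x, 0 <= x <= 1 -> forall eps, 0 < eps -> exists d, 0 < d /\
     forall x' t, 0 <= x' <= 1 -> 0 <= t <= 1 -> Rabs (x' - x) < d -> Rabs (K x' t - K x t) < eps) ->
  (forall x, 0 <= x <= 1 -> contR (fun t => K x (cl t))) ->
  cont_on01 (fun x => RInt (K x) 0 1).
Proof.
  intros H1 H2 x Hx eps He. destruct (H1 x Hx (eps/2) ltac:(lra)) as [d [Hd K1]].
  exists d. split; auto. intros y Hy Hyd.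
  assert (E : forall z, 0 <= z <= 1 -> RInt (K z) 0 1 = RInt (fun t => K z (cl t)) 0 1).
  { intros z Hz. apply RInt_ext. intros t Ht. rewrite Rmin_left, Rmax_right in Ht by lra.
    rewrite cl_id by lra. reflexivity. }
  rewrite !E by auto.
  rewrite <- RInt_minusR by (apply exi, H2; auto).
  eapply Rle_lt_trans.
  { apply (RInt_bound _ (fun _ => 1) (eps/2)).
    - apply ex_RInt_minusR; apply exi, H2; auto.
    - apply ex_RInt_const.
    - intros t Ht. rewrite cl_id by lra. rewrite Rmult_1_l. left. apply K1; auto; lra. }
  rewrite RInt_constR. lra.
Qed.

Lemma exk_abs x : 0 <= x <= 1 -> ex_RInt (fun t => Rabs (k x t)) 0 1.
Proof.
  intros Hx. apply (ex_RInt_ext (fun t => Rabs (k x (cl t)))).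
  { intros t Ht. rewrite Rmin_left, Rmax_right in Ht by lra. rewrite cl_id by lra. reflexivity. }
  apply exi. intro t. apply (continuity_pt_comp (fun t => k x (cl t)) Rabs t (kcont_t x Hx t) (Rcontinuity_abs _)).
Qed.

Lemma M2_prop : (forall x, 0 <= x <= 1 -> RInt (fun t => Rabs (k x t)) 0 1 <= M2 k) /\ 0 <= M2 k.
Proof.
  set (F := fun x => RInt (fun t => Rabs (k x t)) 0 1).
  assert (CF : cont_on01 F).
  { apply (intK_cont (fun x t => Rabs (k x t))).
    - intros x Hx eps He. destruct (kunif x Hx eps He) as [d [Hd K]]. exists d; split; auto.
      intros. eapply Rle_lt_trans; [apply Rabs_triang_inv2|]. auto.
    - intros x Hx t. apply (continuity_pt_comp (fun t => k x (cl t)) Rabs t (kcont_t x Hx t) (Rcontinuity_abs _)). }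
  destruct (continuity_ab_maj (fun x => F (cl x)) 0 1 ltac:(lra) (fun c _ => cont_cl F CF c)) as [Mx [HMx _]].
  destruct (max01_ub F (F (cl Mx))) as [A [B _]].
  - intros x Hx. split.
    + apply RInt_ge_0; try lra. apply exk_abs; auto. intros; apply Rabs_pos.
    + specialize (HMx x Hx). rewrite cl_id in HMx by auto. exact HMx.
  - split; auto.
Qed.
End Kern.

Definition Uo (psi : R -> R) x := RInt (fun s => G0 x s * psi s) 0 1.
Definition Vo (psi : R -> R) x := RInt (fun s => G1 x s * psi s) 0 1.
Definition Zo (k : R -> R -> R) (psi : R -> R) x := RInt (fun t => k x t * Uo psi t) 0 1.

Lemma G0psi_cont psi x : contR psi -> contR (fun s => G0 x s * psi s).
Proof. intros H s. apply continuity_pt_mult; auto. apply G0_cont. Qed.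
Lemma G1psi_cont psi x : contR psi -> contR (fun s => G1 x s * psi s).
Proof. intros H s. apply continuity_pt_mult; auto. apply G1_cont. Qed.

Lemma U_cl_cont psi : contR psi -> contR (fun x => Uo psi (cl x)).
Proof.
  intros H x. apply continuity_pt_ext with (fun x => F0 psi (cl x)).
  { intro y. unfold Uo. rewrite U_F0; auto. apply cl_in. }
  apply (continuity_pt_comp cl (F0 psi)). apply cl_cont.
  apply cont_cpt, (ex_derive_continuous (K:=R_AbsRing) (V:=R_NormedModule)). eexists. apply F0_der; auto.
Qed.
Lemma V_cl_cont psi : contR psi -> contR (fun x => Vo psi (cl x)).
Proof.
  intros H x. apply continuity_pt_ext with (fun x => F1 psi (cl x)).
  { intro y. unfold Vo. rewrite V_F1; auto. apply cl_in. }
  apply (continuity_pt_comp cl (F1 psi)). apply cl_cont.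
  apply cont_cpt, (ex_derive_continuous (K:=R_AbsRing) (V:=R_NormedModule)). eexists. apply F1_der; auto.
Qed.

Lemma U_diff psi1 psi2 d : contR psi1 -> contR psi2 ->
  (forall s, 0 < s < 1 -> Rabs (psi1 s - psi2 s) <= d) ->
  forall x, 0 <= x <= 1 -> Rabs (Uo psi1 x - Uo psi2 x) <= M0 * d.
Proof.
  intros H1 H2 Hd x Hx. unfold Uo.
  rewrite <- RInt_minusR by (apply exi, G0psi_cont; auto).
  assert (d0 : 0 <= d) by (specialize (Hd (1/2) ltac:(lra)); pose proof (Rabs_pos (psi1 (1/2) - psi2 (1/2))); lra).
  eapply Rle_trans.
  { apply (RInt_bound _ (fun s => Rabs (G0 x s)) d).
    - apply ex_RInt_minusR; apply exi, G0psi_cont; auto.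
    - apply exi. intro s. apply (continuity_pt_comp (fun s => G0 x s) Rabs s (G0_cont x s) (Rcontinuity_abs _)).
    - intros s Hs. rewrite <- Rmult_minus_distr_l, Rabs_mult.
      apply Rmult_le_compat_l; [apply Rabs_pos| auto]. }
  destruct M0_prop as [A _]. apply Rmult_le_compat_r; auto.
Qed.

Lemma V_diff psi1 psi2 d : contR psi1 -> contR psi2 ->
  (forall s, 0 < s < 1 -> Rabs (psi1 s - psi2 s) <= d) ->
  forall x, 0 <= x <= 1 -> Rabs (Vo psi1 x - Vo psi2 x) <= M1 * d.
Proof.
  intros H1 H2 Hd x Hx. unfold Vo.
  rewrite <- RInt_minusR by (apply exi, G1psi_cont; auto).
  assert (d0 : 0 <= d) by (specialize (Hd (1/2) ltac:(lra)); pose proof (Rabs_pos (psi1 (1/2) - psi2 (1/2))); lra).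
  eapply Rle_trans.
  { apply (RInt_bound _ (fun s => Rabs (G1 x s)) d).
    - apply ex_RInt_minusR; apply exi, G1psi_cont; auto.
    - apply exi. intro s. apply (continuity_pt_comp (fun s => G1 x s) Rabs s (G1_cont x s) (Rcontinuity_abs _)).
    - intros s Hs. rewrite <- Rmult_minus_distr_l, Rabs_mult.
      apply Rmult_le_compat_l; [apply Rabs_pos| auto]. }
  destruct M1_prop as [A _]. apply Rmult_le_compat_r; auto.
Qed.

Lemma U_zero x : Uo (fun _ => 0) x = 0.
Proof.
  unfold Uo. rewrite (RInt_ext _ (fun _ => 0)). rewrite RInt_constR. fixR; ring.
  intros; fixR; ring.
Qed.
Lemma V_zero x : Vo (fun _ => 0) x = 0.
Proof.
  unfold Vo. rewrite (RInt_ext _ (fun _ => 0)). rewrite RInt_constR. fixR; ring.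
  intros; fixR; ring.
Qed.
Lemma contR0 : contR (fun _ => 0).
Proof. intro; apply continuity_pt_const; intro; auto. Qed.

Section Kz.
Variable k : R -> R -> R.
Hypothesis Hk : cont_square k.

Lemma exkU psi x : contR psi -> 0 <= x <= 1 -> ex_RInt (fun t => k x t * Uo psi t) 0 1.
Proof.
  intros H Hx. apply (ex_RInt_ext (fun t => k x (cl t) * Uo psi (cl t))).
  { intros t Ht. rewrite Rmin_left, Rmax_right in Ht by lra. rewrite cl_id by lra. reflexivity. }
  apply exi. intro t. apply continuity_pt_mult. apply kcont_t; auto. apply U_cl_cont; auto.
Qed.

Lemma Z_diff psi1 psi2 e : contR psi1 -> contR psi2 -> 0 <= e ->
  (forall t, 0 < t < 1 -> Rabs (Uo psi1 t - Uo psi2 t) <= e) ->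
  forall x, 0 <= x <= 1 -> Rabs (Zo k psi1 x - Zo k psi2 x) <= M2 k * e.
Proof.
  intros H1 H2 He Hd x Hx. unfold Zo.
  rewrite <- RInt_minusR by (apply exkU; auto).
  eapply Rle_trans.
  { apply (RInt_bound _ (fun t => Rabs (k x t)) e).
    - apply ex_RInt_minusR; apply exkU; auto.
    - apply exk_abs; auto.
    - intros s Hs. rewrite <- Rmult_minus_distr_l, Rabs_mult.
      apply Rmult_le_compat_l; [apply Rabs_pos| auto]. }
  destruct (M2_prop k Hk) as [A _]. apply Rmult_le_compat_r; auto.
Qed.

Lemma Z_zero x : Zo k (fun _ => 0) x = 0.
Proof.
  unfold Zo. rewrite (RInt_ext _ (fun _ => 0)). rewrite RInt_constR. fixR; ring.
  intros. rewrite U_zero. fixR; ring.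
Qed.

Lemma Z_cont psi B : contR psi -> (forall t, 0 <= t <= 1 -> Rabs (Uo psi t) <= B) ->
  cont_on01 (Zo k psi).
Proof.
  intros H HB. unfold Zo.
  apply (intK_cont (fun x t => k x t * Uo psi t)).
  - intros x Hx eps He.
    assert (B0 : 0 <= B) by (specialize (HB 0 ltac:(lra)); pose proof (Rabs_pos (Uo psi 0)); lra).
    destruct (kunif k Hk x Hx (eps / (B + 1))) as [d [Hd K]].
    { apply Rdiv_lt_0_compat; lra. }
    exists d. split; auto. intros x' t Hx' Ht Hxd.
    rewrite <- Rmult_minus_distr_r, Rabs_mult.
    specialize (K x' t Hx' Ht Hxd). specialize (HB t Ht).
    apply Rle_lt_trans with (eps / (B + 1) * B).
    { apply Rmult_le_compat; try apply Rabs_pos; lra. }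
    replace (eps / (B + 1) * B) with (eps - eps / (B + 1)) by (field; lra).
    assert (0 < eps / (B + 1)) by (apply Rdiv_lt_0_compat; lra). lra.
  - intros x Hx t. apply continuity_pt_mult. apply kcont_t; auto. apply U_cl_cont; auto.
Qed.
End Kz.

Section Main.
Variable k : R -> R -> R.
Variable f : R -> R -> R -> R -> R.
Variables M L0 L1 L2 : R.
Hypothesis Hk : cont_square k.
Hypothesis HM : 0 < M.
Hypothesis HL0 : 0 <= L0.
Hypothesis HL1 : 0 <= L1.
Hypothesis HL2 : 0 <= L2.
Hypothesis Hfc : cont_on_D k M f.
Hypothesis Hfr : forall x u v z, inD k M x u v z -> 0 <= f x u v z <= M.
Hypothesis Hlip : forall x1 u1 v1 z1 x2 u2 v2 z2,
     inD k M x1 u1 v1 z1 -> inD k M x2 u2 v2 z2 ->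
     Rabs (f x2 u2 v2 z2 - f x1 u1 v1 z1)
       <= L0 * Rabs (u2 - u1) + L1 * Rabs (v2 - v1) + L2 * Rabs (z2 - z1).
Hypothesis Hq : L0 * M0 + L1 * M1 + L2 * M2 k < 1.

Definition qq := L0 * M0 + L1 * M1 + L2 * M2 k.
Definition good (psi : R -> R) := contR psi /\ forall x, 0 < x < 1 -> 0 <= psi x <= M.
Definition To (psi : R -> R) x := f (cl x) (Uo psi (cl x)) (Vo psi (cl x)) (Zo k psi (cl x)).

Lemma qq_ge0 : 0 <= qq.
Proof.
  unfold qq. destruct M0_prop as [_ [A _]]. destruct M1_prop as [_ B]. destruct (M2_prop k Hk) as [_ C].
  pose proof (Rmult_le_pos _ _ HL0 A). pose proof (Rmult_le_pos _ _ HL1 B). pose proof (Rmult_le_pos _ _ HL2 C). lra.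
Qed.

Lemma good_bnd psi : good psi -> forall s, 0 < s < 1 -> Rabs (psi s - 0) <= M.
Proof. intros [_ H] s Hs. specialize (H s Hs). rewrite Rminus_0_r, Rabs_pos_eq; lra. Qed.

Lemma U_bnd psi : good psi -> forall x, 0 <= x <= 1 -> Rabs (Uo psi x) <= M0 * M.
Proof.
  intros Hg x Hx. pose proof (U_diff psi (fun _ => 0) M (proj1 Hg) contR0 (good_bnd psi Hg) x Hx).
  rewrite U_zero, Rminus_0_r in H. auto.
Qed.

Lemma U_pos psi : good psi -> forall x, 0 <= x <= 1 -> 0 <= Uo psi x.
Proof.
  intros [Hc Hr] x Hx. unfold Uo. apply RInt_ge_0; try lra. apply exi, G0psi_cont; auto.
  intros s Hs. apply Rmult_le_pos. apply G0_pos; lra. apply Hr; auto.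
Qed.

Lemma inD_good psi : good psi -> forall x, 0 <= x <= 1 -> inD k M x (Uo psi x) (Vo psi x) (Zo k psi x).
Proof.
  intros Hg x Hx. split; [auto|]. split; [|split].
  - split. apply U_pos; auto. pose proof (U_bnd psi Hg x Hx). apply Rabs_le_between in H. lra.
  - pose proof (V_diff psi (fun _ => 0) M (proj1 Hg) contR0 (good_bnd psi Hg) x Hx).
    rewrite V_zero, Rminus_0_r in H. auto.
  - destruct M0_prop as [_ [A _]].
    assert (Z : Rabs (Zo k psi x - Zo k (fun _ => 0) x) <= M2 k * (M0 * M)).
    { apply (Z_diff k Hk psi (fun _ => 0) (M0*M) (proj1 Hg) contR0 ltac:(nra)); auto.
      intros t Ht. rewrite U_zero, Rminus_0_r. apply U_bnd; auto; lra. }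
    rewrite Z_zero, Rminus_0_r in Z. replace (M0 * M2 k * M) with (M2 k * (M0 * M)) by ring; auto.
Qed.

Lemma T_range psi : good psi -> forall x, 0 <= To psi x <= M.
Proof. intros Hg x. unfold To. apply Hfr. apply inD_good; auto. apply cl_in. Qed.

Lemma T_cont psi : good psi -> contR (To psi).
Proof.
  intros Hg x0. apply cpt_intro. intros eps He.
  pose proof (inD_good psi Hg (cl x0) (cl_in x0)) as D0.
  destruct (Hfc _ _ _ _ D0 eps He) as [d [Hd K]].
  destruct (cpt_elim _ x0 (U_cl_cont psi (proj1 Hg) x0) d Hd) as [d1 [Hd1 K1]].
  destruct (cpt_elim _ x0 (V_cl_cont psi (proj1 Hg) x0) d Hd) as [d2 [Hd2 K2]].
  assert (ZC : contR (fun x => Zo k psi (cl x))).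
  { intro z. apply (cont_cl (Zo k psi)). apply (Z_cont k Hk psi (M0 * M) (proj1 Hg)). apply U_bnd; auto. }
  destruct (cpt_elim _ x0 (ZC x0) d Hd) as [d3 [Hd3 K3]].
  exists (Rmin (Rmin d d1) (Rmin d2 d3)). split. { repeat apply Rmin_pos; auto. }
  intros y Hy.
  pose proof (Rmin_l (Rmin d d1) (Rmin d2 d3)). pose proof (Rmin_r (Rmin d d1) (Rmin d2 d3)).
  pose proof (Rmin_l d d1). pose proof (Rmin_r d d1). pose proof (Rmin_l d2 d3). pose proof (Rmin_r d2 d3).
  unfold To. apply K.
  - apply inD_good; auto. apply cl_in.
  - eapply Rle_lt_trans; [apply cl_lip|]. lra.
  - apply K1; lra.
  - apply K2; lra.
  - apply K3; lra.
Qed.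

Lemma T_good psi : good psi -> good (To psi).
Proof. intros Hg. split. apply T_cont; auto. intros x _. apply T_range; auto. Qed.

Lemma T_contr psi1 psi2 d : good psi1 -> good psi2 ->
  (forall s, 0 < s < 1 -> Rabs (psi1 s - psi2 s) <= d) ->
  forall x, Rabs (To psi1 x - To psi2 x) <= qq * d.
Proof.
  intros G1 G2 Hd x.
  assert (d0 : 0 <= d) by (specialize (Hd (1/2) ltac:(lra)); pose proof (Rabs_pos (psi1 (1/2) - psi2 (1/2))); lra).
  pose proof (cl_in x) as Hx.
  unfold To. set (y := cl x) in *.
  eapply Rle_trans. apply Hlip; apply inD_good; auto.
  pose proof (U_diff psi1 psi2 d (proj1 G1) (proj1 G2) Hd y Hx) as A1.
  pose proof (V_diff psi1 psi2 d (proj1 G1) (proj1 G2) Hd y Hx) as A2.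
  destruct M0_prop as [_ [P0 P1]].
  pose proof (Z_diff k Hk psi1 psi2 (M0 * d) (proj1 G1) (proj1 G2) ltac:(nra)
     (fun t Ht => U_diff psi1 psi2 d (proj1 G1) (proj1 G2) Hd t ltac:(lra)) y Hx) as A3.
  destruct (M2_prop k Hk) as [_ P2].
  unfold qq.
  assert (L0 * Rabs (Uo psi1 y - Uo psi2 y) <= L0 * (M0 * d)) by (apply Rmult_le_compat_l; auto).
  assert (L1 * Rabs (Vo psi1 y - Vo psi2 y) <= L1 * (M1 * d)) by (apply Rmult_le_compat_l; auto).
  assert (L2 * Rabs (Zo k psi1 y - Zo k psi2 y) <= L2 * (M2 k * (M0 * d))) by (apply Rmult_le_compat_l; auto).
  assert (M2 k * (M0 * d) <= M2 k * d) by (apply Rmult_le_compat_l; auto; nra).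
  assert (L2 * (M2 k * (M0 * d)) <= L2 * (M2 k * d)) by (apply Rmult_le_compat_l; auto).
  nra.
Qed.

Lemma qq_lt1 : qq < 1.
Proof. exact Hq. Qed.

Lemma geo_small y : 0 < y -> exists N, forall n, (n >= N)%nat -> qq ^ n < y.
Proof.
  intros Hy. destruct (pow_lt_1_zero qq) with (y := y) as [N HN]; auto.
  { pose proof qq_ge0. pose proof qq_lt1. rewrite Rabs_pos_eq; lra. }
  exists N. intros n Hn. specialize (HN n Hn). eapply Rle_lt_trans; [apply Rle_abs| exact HN].
Qed.

Lemma geo_zero a C : 0 <= C -> (forall n, a <= C * qq ^ n) -> a <= 0.
Proof.
  intros HC H. destruct (Rle_dec a 0) as [|Ha]; auto. exfalso.
  destruct (geo_small (a / (C + 1))) as [N HN]. { apply Rdiv_lt_0_compat; lra. }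
  specialize (HN N (le_n _)). specialize (H N).
  assert (C * qq ^ N <= C * (a / (C + 1))) by (apply Rmult_le_compat_l; lra).
  assert (C * (a / (C + 1)) < a).
  { replace (C * (a / (C + 1))) with (a - a / (C + 1)) by (field; lra).
    assert (0 < a / (C + 1)) by (apply Rdiv_lt_0_compat; lra). lra. }
  lra.
Qed.

Lemma Rabs3 a b c : Rabs (a + b - c) <= Rabs a + Rabs b + Rabs c.
Proof. unfold Rabs; repeat destruct Rcase_abs; lra. Qed.

Fixpoint phi (n : nat) : R -> R :=
  match n with O => fun _ => 0 | S n => To (phi n) end.

Lemma phi_good n : good (phi n).
Proof.
  induction n as [|n IH]; simpl.
  - split. apply contR0. intros; lra.
  - apply T_good; auto.
Qed.

Lemma phi_step n x : Rabs (phi (S n) x - phi n x) <= M * qq ^ n.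
Proof.
  revert x. induction n as [|n IH]; intro x.
  - simpl. rewrite Rminus_0_r. pose proof (T_range (fun _ => 0) (phi_good 0) x). simpl in H.
    rewrite Rabs_pos_eq; lra.
  - change (Rabs (To (phi (S n)) x - To (phi n) x) <= M * qq ^ S n).
    eapply Rle_trans. apply T_contr; try apply phi_good. intros s _. apply IH.
    simpl. right; ring.
Qed.

Definition ee n := M * qq ^ n / (1 - qq).

Lemma phi_cauchy n j x : Rabs (phi (j + n) x - phi n x) <= M * qq ^ n * (1 - qq ^ j) / (1 - qq).
Proof.
  pose proof qq_ge0. pose proof qq_lt1.
  induction j as [|j IH].
  - simpl. rewrite Rminus_eq_0, Rabs_R0. unfold Rdiv. rewrite Rminus_eq_0. lra.
  - replace (phi (S j + n) x - phi n x) with ((phi (S (j + n)) x - phi (j + n) x) + (phi (j + n) x - phi n x)) by (simpl; ring).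
    eapply Rle_trans. apply Rabs_triang.
    pose proof (phi_step (j + n) x). rewrite pow_add in H1.
    apply Rle_trans with (M * (qq ^ j * qq ^ n) + M * qq ^ n * (1 - qq ^ j) / (1 - qq)). lra.
    right. simpl. field. lra.
Qed.

Lemma phi_cauchy2 n m x : (n <= m)%nat -> Rabs (phi m x - phi n x) <= ee n.
Proof.
  intros Hnm. replace m with ((m - n) + n)%nat by lia.
  eapply Rle_trans. apply phi_cauchy. unfold ee.
  pose proof qq_ge0. pose proof qq_lt1. pose proof (pow_le qq (m - n) H).
  pose proof (pow_le qq n H).
  unfold Rdiv. apply Rmult_le_compat_r. { left; apply Rinv_0_lt_compat; lra. }
  assert (0 <= M * qq ^ n) by (apply Rmult_le_pos; lra). nra.
Qed.

Lemma ee_small eps : 0 < eps -> exists N, forall n, (n >= N)%nat -> ee n < eps.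
Proof.
  intros He. pose proof qq_ge0. pose proof qq_lt1.
  destruct (geo_small (eps * (1 - qq) / (M + 1))) as [N HN].
  { apply Rdiv_lt_0_compat; [apply Rmult_lt_0_compat|]; lra. }
  exists N. intros n Hn. specialize (HN n Hn). unfold ee.
  apply Rmult_lt_reg_r with (1 - qq). lra.
  unfold Rdiv. rewrite Rmult_assoc, Rinv_l, Rmult_1_r by lra.
  assert (M * qq ^ n <= M * (eps * (1 - qq) / (M + 1))) by (apply Rmult_le_compat_l; lra).
  assert (M * (eps * (1 - qq) / (M + 1)) < eps * (1 - qq)).
  { replace (M * (eps * (1 - qq) / (M + 1))) with (eps * (1 - qq) - eps * (1 - qq) / (M + 1)) by (field; lra).
    assert (0 < eps * (1 - qq) / (M + 1)) by (apply Rdiv_lt_0_compat; [apply Rmult_lt_0_compat|]; lra). lra. }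
  lra.
Qed.

Lemma phi_exlim x : ex_finite_lim_seq (fun n => phi n x).
Proof.
  apply ex_lim_seq_cauchy_corr. intros eps.
  destruct (ee_small (eps / 2)) as [N HN]. { pose proof (cond_pos eps). lra. }
  exists N. intros n m Hn Hm.
  pose proof (phi_cauchy2 N n x Hn). pose proof (phi_cauchy2 N m x Hm). specialize (HN N (le_n _)).
  replace (phi n x - phi m x) with ((phi n x - phi N x) - (phi m x - phi N x)) by ring.
  eapply Rle_lt_trans. apply Rabs_triang. rewrite Rabs_Ropp. lra.
Qed.

Definition phinf x := real (Lim_seq (fun n => phi n x)).

Lemma phinf_lim x : is_lim_seq (fun n => phi n x) (phinf x).
Proof.
  destruct (phi_exlim x) as [l Hl]. unfold phinf. rewrite (is_lim_seq_unique _ _ Hl). exact Hl.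
Qed.

Lemma phinf_bound n x : Rabs (phinf x - phi n x) <= ee n.
Proof.
  assert (L : is_lim_seq (fun m => Rabs (phi (m + n) x - phi n x)) (Rabs (phinf x - phi n x))).
  { apply (is_lim_seq_abs _ (Finite (phinf x - phi n x))).
    apply is_lim_seq_minus'. apply (is_lim_seq_incr_n (fun m => phi m x)). apply phinf_lim.
    apply is_lim_seq_const. }
  pose proof (is_lim_seq_le _ _ _ _ (fun m => phi_cauchy2 n (m + n) x ltac:(lia)) L (is_lim_seq_const (ee n))).
  simpl in H. exact H.
Qed.

Lemma ee_eq n : ee n = (M / (1 - qq)) * qq ^ n.
Proof. unfold ee. pose proof qq_lt1. field. lra. Qed.
Lemma eeC : 0 <= M / (1 - qq).
Proof. pose proof qq_lt1. apply Rle_trans with 0; [lra|]. left. apply Rdiv_lt_0_compat; lra. Qed.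

Lemma phinf_good : good phinf.
Proof.
  split.
  - intro x0. apply cpt_intro. intros eps He.
    destruct (ee_small (eps / 3)) as [n Hn]. lra. specialize (Hn n (le_n _)).
    destruct (cpt_elim _ x0 (proj1 (phi_good n) x0) (eps / 3)) as [d [Hd K]]. lra.
    exists d. split; auto. intros y Hy.
    pose proof (phinf_bound n y). pose proof (phinf_bound n x0). specialize (K y Hy).
    replace (phinf y - phinf x0) with ((phinf y - phi n y) + (phi n y - phi n x0) - (phinf x0 - phi n x0)) by ring.
    eapply Rle_lt_trans. apply Rabs3. lra.
  - intros x Hx. split.
    + assert (- phinf x <= 0); [|lra]. apply (geo_zero _ (M / (1 - qq)) eeC). intro n.
      rewrite <- ee_eq. pose proof (phinf_bound n x). pose proof (proj2 (phi_good n) x Hx).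
      apply Rabs_le_between in H. lra.
    + assert (phinf x - M <= 0); [|lra]. apply (geo_zero _ (M / (1 - qq)) eeC). intro n.
      rewrite <- ee_eq. pose proof (phinf_bound n x). pose proof (proj2 (phi_good n) x Hx).
      apply Rabs_le_between in H. lra.
Qed.

Lemma phinf_fix x : To phinf x = phinf x.
Proof.
  assert (Rabs (To phinf x - phinf x) <= 0); [|pose proof (Rabs_pos (To phinf x - phinf x));
     apply Rminus_diag_uniq; destruct (Rcase_abs (To phinf x - phinf x)); [rewrite Rabs_left in *; lra| rewrite Rabs_right in *; lra]].
  apply (geo_zero _ (2 * (M / (1 - qq)))). pose proof eeC; lra.
  intro n. pose proof qq_ge0. pose proof qq_lt1.
  assert (A1 : Rabs (To phinf x - To (phi n) x) <= qq * ee n).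
  { apply T_contr. apply phinf_good. apply phi_good. intros s _. apply phinf_bound. }
  pose proof (phinf_bound (S n) x) as A2. simpl phi in A2.
  replace (To phinf x - phinf x) with ((To phinf x - To (phi n) x) - (phinf x - To (phi n) x)) by ring.
  eapply Rle_trans. apply Rabs_triang. rewrite Rabs_Ropp.
  rewrite !ee_eq in *. simpl in A2.
  pose proof eeC. pose proof (pow_le qq n qq_ge0).
  assert (qq * (M / (1 - qq) * qq ^ n) <= M / (1 - qq) * qq ^ n).
  { rewrite <- (Rmult_1_l (M / (1 - qq) * qq ^ n)) at 2. apply Rmult_le_compat_r. apply Rmult_le_pos; auto. lra. }
  assert (M / (1 - qq) * (qq * qq ^ n) <= M / (1 - qq) * qq ^ n).
  { apply Rmult_le_compat_l; auto. nra. }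
  lra.
Qed.

Lemma contR_on01 g : contR g -> cont_on01 g.
Proof.
  intros H x _ eps He. destruct (cpt_elim g x (H x) eps He) as [d [Hd K]].
  exists d. split; auto.
Qed.

Lemma Rabs_eq0 a : Rabs a <= 0 -> a = 0.
Proof. intro H. pose proof (Rabs_pos a). unfold Rabs in *. destruct Rcase_abs; lra. Qed.

Lemma phinf_nz (Hnz : exists x, 0 <= x <= 1 /\ f x 0 0 0 <> 0) :
  exists s0, 0 <= s0 <= 1 /\ 0 < phinf s0.
Proof.
  apply NNPP. intro Hn.
  assert (Z : forall s, 0 <= s <= 1 -> phinf s = 0).
  { intros s Hs. rewrite <- phinf_fix. pose proof (T_range phinf phinf_good s).
    rewrite phinf_fix in *. destruct (Rle_dec (phinf s) 0). lra. exfalso. apply Hn. exists s. split; auto. lra. }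
  destruct Hnz as [x0 [Hx0 Hf]]. apply Hf.
  assert (U0 : forall x, Uo phinf x = 0).
  { intro x. unfold Uo. rewrite (RInt_ext _ (fun _ => 0)). rewrite RInt_constR. fixR; ring.
    intros s Hs. rewrite Rmin_left, Rmax_right in Hs by lra. rewrite Z by lra. fixR; ring. }
  assert (V0 : Vo phinf x0 = 0).
  { unfold Vo. rewrite (RInt_ext _ (fun _ => 0)). rewrite RInt_constR. fixR; ring.
    intros s Hs. rewrite Rmin_left, Rmax_right in Hs by lra. rewrite Z by lra. fixR; ring. }
  assert (Z0 : Zo k phinf x0 = 0).
  { unfold Zo. rewrite (RInt_ext _ (fun _ => 0)). rewrite RInt_constR. fixR; ring.
    intros s Hs. rewrite U0. fixR; ring. }
  assert (E : phinf x0 = f x0 0 0 0).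
  { rewrite <- phinf_fix at 1. unfold To. rewrite cl_id by auto. rewrite U0, V0, Z0. reflexivity. }
  rewrite <- E. apply Z; auto.
Qed.

Lemma U_spos (Hnz : exists x, 0 <= x <= 1 /\ f x 0 0 0 <> 0) x : 0 < x < 1 -> 0 < Uo phinf x.
Proof.
  intros Hx. destruct (phinf_nz Hnz) as [s0 [Hs0 Hp]].
  destruct (cpt_elim phinf s0 (proj1 phinf_good s0) (phinf s0 / 2)) as [d [Hd K]]. lra.
  set (a := Rmax 0 (s0 - d / 2)). set (b := Rmin 1 (s0 + d / 2)).
  assert (Hab : 0 <= a /\ a < b /\ b <= 1 /\ s0 - d / 2 <= a /\ b <= s0 + d / 2).
  { unfold a, b, Rmax, Rmin. repeat destruct Rle_dec; lra. }
  set (g := fun s => G0 x s * phinf s).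
  assert (Hg : contR g) by (apply G0psi_cont, phinf_good).
  assert (gpos : forall s, 0 < s < 1 -> 0 <= g s).
  { intros s Hs. unfold g. apply Rmult_le_pos. apply G0_pos; lra. apply phinf_good; auto. }
  unfold Uo. fold g.
  rewrite <- (RInt_ChaslesR g 0 a 1) by (apply exi; auto).
  rewrite <- (RInt_ChaslesR g a b 1) by (apply exi; auto).
  assert (0 <= RInt g 0 a) by (apply RInt_ge_0; try lra; [apply exi; auto| intros; apply gpos; lra]).
  assert (0 <= RInt g b 1) by (apply RInt_ge_0; try lra; [apply exi; auto| intros; apply gpos; lra]).
  assert (0 < RInt g a b); [|lra].
  apply RInt_gt_0; try lra.
  - intros s Hs. unfold g. apply Rmult_lt_0_compat. apply G0_spos; lra.
    assert (Rabs (s - s0) < d) by (apply Rabs_def1; lra). specialize (K s H1).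
    apply Rabs_def2 in K. lra.
  - intros s _. apply cpt_cont, Hg.
Qed.

Lemma sol_exists (Hnz : exists x, 0 <= x <= 1 /\ f x 0 0 0 <> 0) : is_pos_sol k f M (Uo phinf).
Proof.
  pose proof (proj1 phinf_good) as Hc.
  exists (Vo phinf), (F2 phinf), (F3 phinf), phinf.
  split; [|split; [|split; [|split; [|split; [|split; [|split; [|split; [|split; [|split; [|split]]]]]]]]]].
  - apply (deriv_ext (F0 phinf) (F1 phinf)). apply isd_deriv. intro; apply F0_der; auto.
    intros; unfold Uo; rewrite U_F0; auto. intros; unfold Vo; rewrite V_F1; auto.
  - apply (deriv_ext (F1 phinf) (F2 phinf)). apply isd_deriv. intro; apply F1_der; auto.
    intros; unfold Vo; rewrite V_F1; auto. auto.
  - apply isd_deriv. intro; apply F2_der; auto.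
  - apply isd_deriv. intro; apply F3_der; auto.
  - apply contR_on01; auto.
  - intros x Hx. rewrite <- phinf_fix at 1. unfold To. rewrite cl_id by lra. reflexivity.
  - unfold Uo. rewrite U_F0 by (auto; lra). apply F0_0.
  - unfold Uo. rewrite U_F0 by (auto; lra). apply F0_1.
  - apply F2_0.
  - apply F2_1.
  - intros x Hx. apply U_spos; auto.
  - intros x Hx. destruct (inD_good phinf phinf_good x Hx) as [_ [A [B _]]]. auto.
Qed.

Lemma isd_lin a b c d : forall x, is_derive (fun x => a * x^3 / 6 + b * x^2 / 2 + c * x + d) x (a * x^2 / 2 + b * x + c).
Proof. intro x. auto_derive; auto. field. Qed.

Lemma bvp_unique psi w w1 w2 w3 w4 : contR psi ->
  deriv_on01 w w1 -> deriv_on01 w1 w2 -> deriv_on01 w2 w3 -> deriv_on01 w3 w4 ->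
  (forall x, 0 <= x <= 1 -> w4 x = psi x) ->
  w 0 = 0 -> w 1 = 0 -> w2 0 = 0 -> w2 1 = 0 ->
  forall x, 0 <= x <= 1 -> w x = F0 psi x /\ w1 x = F1 psi x.
Proof.
  intros Hc D1 D2 D3 D4 E4 B0 B1 B20 B21.
  pose proof (deriv_minus _ _ _ _ D4 (isd_deriv _ _ (F3_der psi Hc))) as K3.
  pose proof (const01 _ _ K3 ltac:(intros x Hx; cbv beta; rewrite E4; auto; ring)) as C3.
  set (a := w3 0 - F3 psi 0) in *.
  pose proof (deriv_minus _ _ _ _ (deriv_minus _ _ _ _ D3 (isd_deriv _ _ (F2_der psi Hc)))
      (isd_deriv _ _ (isd_lin 0 0 a 0))) as K2.
  pose proof (const01 _ _ K2 ltac:(intros x Hx; cbv beta; rewrite C3; auto; field)) as C2.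
  set (b := w2 0 - F2 psi 0 - (0 * 0 ^ 3 / 6 + 0 * 0 ^ 2 / 2 + a * 0 + 0)) in *.
  pose proof (deriv_minus _ _ _ _ (deriv_minus _ _ _ _ D2 (isd_deriv _ _ (F1_der psi Hc)))
      (isd_deriv _ _ (isd_lin 0 a b 0))) as K1.
  pose proof (const01 _ _ K1 ltac:(intros x Hx; specialize (C2 x Hx); simpl in C2 |- *; lra)) as C1.
  set (c := w1 0 - F1 psi 0 - (0 * 0 ^ 3 / 6 + a * 0 ^ 2 / 2 + b * 0 + 0)) in *.
  pose proof (deriv_minus _ _ _ _ (deriv_minus _ _ _ _ D1 (isd_deriv _ _ (F0_der psi Hc)))
      (isd_deriv _ _ (isd_lin a b c 0))) as K0.
  pose proof (const01 _ _ K0 ltac:(intros x Hx; specialize (C1 x Hx); simpl in C1 |- *; lra)) as C0.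
  assert (hb : b = 0). { unfold b. rewrite B20, F2_0. simpl. lra. }
  assert (ha : a = 0). { specialize (C2 1 ltac:(lra)). cbv beta in C2. rewrite B21, F2_1 in C2. simpl in C2. lra. }
  assert (hc : c = 0).
  { specialize (C0 1 ltac:(lra)). cbv beta in C0. rewrite B1, F0_1, B0, F0_0 in C0. rewrite ha, hb in C0. simpl in C0. lra. }
  intros x Hx. specialize (C0 x Hx). specialize (C1 x Hx). cbv beta in C0, C1. rewrite B0, F0_0 in C0.
  rewrite ha, hb, hc in C0, C1. simpl in C0, C1. split; lra.
Qed.

Lemma sol_unique w : is_pos_sol k f M w -> forall x, 0 <= x <= 1 -> w x = Uo phinf x.
Proof.
  intros [w1 [w2 [w3 [w4 [D1 [D2 [D3 [D4 [C4 [Eq [B0 [B1 [B20 [B21 [Pos Bnd]]]]]]]]]]]]]]].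
  set (psi := fun x => w4 (cl x)).
  assert (Hc : contR psi) by (intro z; apply (cont_cl w4); auto).
  pose proof (bvp_unique psi w w1 w2 w3 w4 Hc D1 D2 D3 D4 ltac:(intros; unfold psi; rewrite cl_id; auto) B0 B1 B20 B21) as BV.
  assert (WU : forall x, 0 <= x <= 1 -> w x = Uo psi x).
  { intros. unfold Uo. rewrite U_F0; auto. apply BV; auto. }
  assert (WV : forall x, 0 <= x <= 1 -> w1 x = Vo psi x).
  { intros. unfold Vo. rewrite V_F1; auto. apply BV; auto. }
  assert (FX : forall x, 0 < x < 1 -> psi x = To psi x /\ 0 <= psi x <= M).
  { intros x Hx. unfold psi, To. rewrite !cl_id by lra.
    assert (EZ : RInt (fun t => k x t * w t) 0 1 = Zo k psi x).
    { unfold Zo. apply RInt_ext. intros t Ht. rewrite Rmin_left, Rmax_right in Ht by lra. rewrite WU by lra. reflexivity. }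
    rewrite Eq, EZ, WU, WV by lra. split; auto. apply Hfr.
    split; [lra|]. rewrite <- WU, <- WV by lra. split; [apply Bnd; lra|]. split; [apply Bnd; lra|].
    destruct M0_prop as [_ [P0 _]].
    pose proof (Z_diff k Hk psi (fun _ => 0) (M0 * M) Hc contR0 ltac:(nra)) as ZD.
    assert (Rabs (Zo k psi x - Zo k (fun _ => 0) x) <= M2 k * (M0 * M)).
    { apply ZD; [|lra]. intros t Ht. rewrite U_zero, Rminus_0_r, <- WU by lra.
      destruct (Bnd t ltac:(lra)) as [[Q1 Q2] _]. rewrite Rabs_pos_eq; lra. }
    rewrite Z_zero, Rminus_0_r in H. replace (M0 * M2 k * M) with (M2 k * (M0 * M)) by ring. auto. }
  assert (Gp : good psi) by (split; auto; intros; apply FX; auto).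
  assert (EQ : forall s, 0 < s < 1 -> psi s = phinf s).
  { intros s Hs. apply Rminus_diag_uniq, Rabs_eq0.
    apply (geo_zero _ M); [lra|]. intro n. revert s Hs. induction n as [|n IH]; intros s Hs.
    - simpl. rewrite Rmult_1_r. destruct (FX s Hs) as [_ R1]. pose proof (proj2 phinf_good s Hs).
      apply Rabs_le. lra.
    - rewrite (proj1 (FX s Hs)), <- phinf_fix. eapply Rle_trans. apply T_contr; auto. apply phinf_good.
      simpl. right; ring. }
  intros x Hx. rewrite WU by auto. unfold Uo. apply RInt_ext.
  intros s Hs. rewrite Rmin_left, Rmax_right in Hs by lra. rewrite EQ by lra. reflexivity.
Qed.

End Main.

Theorem theorem2 (k : R -> R -> R) (f : R -> R -> R -> R -> R)
  (M L0 L1 L2 : R) :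
  cont_square k ->
  0 < M -> 0 <= L0 -> 0 <= L1 -> 0 <= L2 ->
  (* (i) *)
  cont_on_D k M f ->
  (forall x u v z, inD k M x u v z -> 0 <= f x u v z <= M) ->
  (exists x, 0 <= x <= 1 /\ f x 0 0 0 <> 0) ->
  (* (ii) *)
  (forall x1 u1 v1 z1 x2 u2 v2 z2,
     inD k M x1 u1 v1 z1 -> inD k M x2 u2 v2 z2 ->
     Rabs (f x2 u2 v2 z2 - f x1 u1 v1 z1)
       <= L0 * Rabs (u2 - u1) + L1 * Rabs (v2 - v1) + L2 * Rabs (z2 - z1)) ->
  (* (iii) *)
  L0 * M0 + L1 * M1 + L2 * M2 k < 1 ->
  exists u, is_pos_sol k f M u /\
    forall w, is_pos_sol k f M w -> forall x, 0 <= x <= 1 -> w x = u x.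
Proof.
  intros Hk HM HL0 HL1 HL2 Hfc Hfr Hnz Hlip Hq.
  exists (Uo (phinf k f)). split.
  - apply (sol_exists k f M L0 L1 L2); auto.
  - intros w Hw x Hx. apply (sol_unique k f M L0 L1 L2); auto.
Qed.
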